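(* Let $p$ be an odd prime, let $r=(p-1)/2$, let $\zeta_p=e^{2\pi i/p}$, and let $\varepsilon=(-1)^{(p-1)/2}$. Let $Q$ be either $Q_1(x)=x^2/p$ or $Q_2(x)=cx^2/p$ with $c$ a fixed quadratic non-residue modulo $p$ (viewed as functions $\mathbb{Z}/p\mathbb{Z}\to\mathbb{Q}/\mathbb{Z}$). For $0\le j\le r$ put $\theta_j=e^{2\pi i Q(j)}$, let $T=\operatorname{diag}(\theta_0,\theta_1,\dots,\theta_r)$ be the $(r+1)\times(r+1)$ diagonal matrix, and let $V_Q$ be the $(r+1)\times(r+1)$ Vandermonde matrix whose $(j,k)$ entry is $\theta_j^{\,k}$ for $0\le j,k\le r$ (it is invertible since the $\theta_j$ are pairwise distinct). Then every entry of $T'=V_Q^{-1}TV_Q$ lies in $\mathbb{Z}\left[\frac{1}{2}(1+\sqrt{\varepsilon p})\right]$, the ring of integers of $\mathbb{Q}(\sqrt{\varepsilon p})$.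
   Context: Here $\sqrt{\varepsilon p}$ denotes $\sqrt{p}$ if $p\equiv 1 \pmod 4$ and $\sqrt{-p}=i\sqrt p$ if $p\equiv 3\pmod 4$; equivalently $\sqrt{\varepsilon p}=\sum_{x\in\mathbb{Z}/p\mathbb{Z}}\zeta_p^{x^2}$. *)

(* Defs.v *)
From HB Require Import structures.
From mathcomp Require Import all_boot all_order all_algebra all_field.
Set Implicit Arguments. Unset Strict Implicit. Unset Printing Implicit Defensive.
Import Order.TTheory GRing.Theory Num.Theory.
Local Open Scope ring_scope.

(* zeta_p = e^{2 pi i / p}: p.-root (-1) is the p-th root of -1 of minimal
   non-negative argument, i.e. e^{i pi / p}; its square is e^{2 pi i/p}. *)
Definition zeta (p : nat) : algC := (p.-root (-1)) ^+ 2.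

Definition sqrt_eps_p (p : nat) : algC :=
  if (p %% 4 == 1)%N then sqrtC p%:R else 'i * sqrtC p%:R.

Definition omega (p : nat) : algC := (1 + sqrt_eps_p p) / 2%:R.

Definition in_Z_omega (p : nat) (x : algC) : Prop :=
  exists P : {poly int}, x = (map_poly intr P).[omega p].

Definition qnr (p : nat) (c : int) : Prop :=
  ~~ (p%:Z %| c)%Z /\ forall x : int, ~~ (p%:Z %| x ^+ 2 - c)%Z.

Definition theta (p : nat) (c : int) (j : nat) : algC :=
  zeta p ^ (c * (j ^ 2)%:Z).

Definition Tmat (p : nat) (c : int) : 'M[algC]_((p.-1)./2.+1) :=
  \matrix_(j, k) (theta p c j *+ (j == k)).

Definition Vmat (p : nat) (c : int) : 'M[algC]_((p.-1)./2.+1) :=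
  \matrix_(j, k) (theta p c j ^+ k).

Definition Tprime (p : nat) (c : int) : 'M[algC]_((p.-1)./2.+1) :=
  invmx (Vmat p c) *m Tmat p c *m Vmat p c.

(* Main.v *)
Require Import Defs.
From HB Require Import structures.
From mathcomp Require Import all_boot all_order all_algebra all_field.
From mathcomp Require Import zify ring lra.
Set Implicit Arguments. Unset Strict Implicit. Unset Printing Implicit Defensive.
Import Order.TTheory GRing.Theory Num.Theory.
Local Open Scope ring_scope.

Section Zomega.
Variable p : nat.

Lemma Zw_int (m : int) : in_Z_omega p m%:~R.
Proof. by exists m%:P; rewrite map_polyC hornerC. Qed.

Lemma Zw_nat (m : nat) : in_Z_omega p m%:R.
Proof. exact: (Zw_int m). Qed.

Lemma Zw_add x y : in_Z_omega p x -> in_Z_omega p y -> in_Z_omega p (x + y).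
Proof. by move=> [P ->] [Q ->]; exists (P + Q); rewrite rmorphD hornerD. Qed.

Lemma Zw_opp x : in_Z_omega p x -> in_Z_omega p (- x).
Proof. by move=> [P ->]; exists (- P); rewrite rmorphN hornerN. Qed.

Lemma Zw_sub x y : in_Z_omega p x -> in_Z_omega p y -> in_Z_omega p (x - y).
Proof. by move=> hx hy; apply: Zw_add => //; apply: Zw_opp. Qed.

Lemma Zw_mul x y : in_Z_omega p x -> in_Z_omega p y -> in_Z_omega p (x * y).
Proof. by move=> [P ->] [Q ->]; exists (P * Q); rewrite rmorphM hornerM. Qed.

Lemma Zw_1 : in_Z_omega p 1.
Proof. by exists 1; rewrite rmorph1 hornerC. Qed.

Lemma Zw_0 : in_Z_omega p 0.
Proof. by exists 0; rewrite rmorph0 horner0. Qed.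

Lemma Zw_omega : in_Z_omega p (omega p).
Proof. by exists 'X; rewrite map_polyX hornerX. Qed.

End Zomega.

Lemma mod4_aux (H : algC) (m : int) : H \in Aint ->
  (1 + 2%:R * H) ^+ 2 = m%:~R -> exists k : int, m - 1 = 4 * k.
Proof.
move=> HA e.
have e2 : (m - 1)%:~R / 4%:R = H ^+ 2 + H :> algC.
  by rewrite rmorphB /= -e; field.
have : ((m - 1)%:~R / 4%:R : algC) \is a Num.int.
  apply: Cint_rat_Aint.
    by rewrite rpredM ?rpredV ?rpred_int ?rpred_nat.
  by rewrite e2 rpredD ?rpredX.
case/intrP => k ek; exists k; apply: (@intr_inj algC).
by rewrite rmorphM /= -ek mulrC divfK ?pnatr_eq0.
Qed.

Section Companion.
Variable m : nat.
Variable th : 'I_m.+1 -> algC.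
Hypothesis th_inj : injective th.

Definition Vm : 'M[algC]_m.+1 := \matrix_(j, k) (th j ^+ k).
Definition Tm : 'M[algC]_m.+1 := \matrix_(j, k) (th j *+ (j == k)).
Definition fp : {poly algC} := \prod_(j < m.+1) ('X - (th j)%:P).
Definition Cm : 'M[algC]_m.+1 :=
  \matrix_(i, k) (if k == ord_max then - fp`_i else ((i : nat) == k.+1)%:R).

Lemma Vm_unit : Vm \in unitmx.
Proof.
have -> : Vm = (Vandermonde m.+1 (\row_j th j))^T by apply/matrixP => j k; rewrite !mxE.
rewrite unitmx_tr unitmxE det_Vandermonde unitfE.
apply/prodf_neq0 => i _; apply/prodf_neq0 => j ij; rewrite !mxE subr_eq0.
by apply/eqP => /th_inj e; move: ij; rewrite e ltnn.
Qed.

Lemma size_idx k : size (index_enum 'I_k) = k.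
Proof. by rewrite /index_enum unlock -enumT size_enum_ord. Qed.

Lemma size_fp : size fp = m.+2.
Proof. by rewrite /fp size_prod_XsubC size_idx. Qed.

Lemma lead_fp : fp`_m.+1 = 1.
Proof.
have := monicP (monic_prod_XsubC (index_enum _) predT th).
by rewrite /lead_coef size_prod_XsubC size_idx.
Qed.

Lemma root_fp j : fp.[th j] = 0.
Proof.
by rewrite /fp horner_prod (bigD1 j) //= hornerXsubC subrr mul0r.
Qed.

Lemma VC : Vm *m Cm = Tm *m Vm.
Proof.
apply/matrixP => j k; rewrite !mxE.
rewrite [RHS](bigD1 j) //= [X in _ = _ + X]big1 ?addr0; last first.
  by move=> i ij; rewrite !mxE eq_sym (negbTE ij) mulr0n mul0r.
rewrite !mxE eqxx mulr1n -exprS.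
have [->|km] := eqVneq k ord_max.
  under eq_bigr do rewrite !mxE eqxx mulrN.
  rewrite sumrN; have := root_fp j.
  rewrite horner_coef size_fp big_ord_recr /= lead_fp mul1r => /eqP.
  rewrite addr_eq0 => /eqP e; rewrite -[RHS]opprK -e; congr (- _).
  by apply: eq_bigr => i _; rewrite mulrC.
have km' : (k.+1 < m.+1)%N.
  by move: km; rewrite -val_eqE /= ltnS => ne; rewrite ltn_neqAle ne -ltnS ltn_ord.
rewrite (bigD1 (Ordinal km')) //= big1 ?addr0.
  by rewrite !mxE (negbTE km) eqxx mulr1.
move=> i ik; rewrite !mxE (negbTE km).
have [e|ne] := eqVneq (i : nat) k.+1; last by rewrite mulr0.
by move: ik; rewrite -val_eqE /= e eqxx.
Qed.

Lemma companion : invmx Vm *m Tm *m Vm = Cm.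
Proof. by rewrite -mulmxA -VC mulmxA mulVmx ?mul1mx // Vm_unit. Qed.
End Companion.

Section Basics.
Variable p : nat.
Hypothesis pr_p : prime p.
Hypothesis odd_p : odd p.

Local Notation F := 'F_p.
Local Notation z := (zeta p).

Lemma p_gt1 : (1 < p)%N. Proof. exact: prime_gt1. Qed.

Lemma zeta_prim : p.-primitive_root z.
Proof.
have p0 : (0 < p)%N by rewrite prime_gt0.
have zp : z ^+ p = 1.
  by rewrite /zeta exprAC rootCK // sqrrN expr1n.
have [m pm mp] := prim_order_exists p0 zp.
have [m1|mp'] : m = 1%N \/ m = p.
  by move: (prime_gt1 pr_p); case/primeP: pr_p => _ /(_ m mp) /orP[] /eqP ->; auto.
- exfalso; have := prim_expr_order pm; rewrite m1 expr1 /zeta => /eqP.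
  rewrite sqrf_eq1 => /orP[] /eqP h.
    by move: (rootCK p0 (-1 : algC)); rewrite h expr1n => /eqP; rewrite -addr_eq0 -[1 + 1]/(2%:R : algC) pnatr_eq0.
  by move: (rootC_lt0 (-1 : algC) p_gt1); rewrite h ltrN10.
- by rewrite mp' in pm.
Qed.

Definition E (x : F) : algC := z ^+ (x : nat).

Lemma Fp_val (x : F) : x = (x : nat)%:R.
Proof.
apply: val_inj => /=; rewrite val_Fp_nat // modn_small //.
by rewrite -{2}(Fp_cast pr_p) ltn_ord.
Qed.

Lemma Enat m : E (m%:R) = z ^+ m.
Proof. by rewrite /E val_Fp_nat // (prim_expr_mod zeta_prim). Qed.

Lemma ED x y : E (x + y) = E x * E y.
Proof. by rewrite [x]Fp_val [y]Fp_val -natrD !Enat exprD. Qed.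

Lemma E0 : E 0 = 1.
Proof. by rewrite /E /= expr0. Qed.

Lemma E_neq0 x : E x != 0.
Proof. by rewrite /E expf_neq0 // (prim_root_eq0 zeta_prim) -lt0n prime_gt0. Qed.

Lemma EN x : E (- x) = (E x)^-1.
Proof.
by rewrite -[LHS]mulr1 -(mulfV (E_neq0 x)) mulrA -ED addNr E0 mul1r.
Qed.

Lemma EMn x m : E (x * m%:R) = E x ^+ m.
Proof. by rewrite [x]Fp_val -natrM !Enat exprM. Qed.

Lemma valF_lt (x : F) : ((x : nat) < p)%N.
Proof. by rewrite -{2}(Fp_cast pr_p) ltn_ord. Qed.

Lemma E_inj : injective E.
Proof.
move=> x y /eqP; rewrite /E (eq_prim_root_expr zeta_prim) !modn_small ?valF_lt //.
by move/eqP/val_inj.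
Qed.

Lemma Fnat_eq0 m : ((m%:R : F) == 0) = (p %| m)%N.
Proof.
apply/eqP/idP => [h | h].
  by have := congr1 (@nat_of_ord _) h; rewrite val_Fp_nat // /dvdn => ->.
by rewrite -Fp_nat_mod //; move: h; rewrite /dvdn => /eqP ->.
Qed.

Lemma two_neq0 : (2%:R : F) != 0.
Proof.
rewrite Fnat_eq0; apply/negP => /(dvdn_leq (isT : (0 < 2)%N)).
case: p pr_p odd_p => [|[|[|q]]] //.
Qed.

Lemma E1 : E 1 = z.
Proof. by rewrite -[1 in LHS]mulr1n Enat expr1. Qed.

Lemma sumE : \sum_(x : F) E x = 0.
Proof.
have h : \sum_(x : F) E x = z * \sum_(x : F) E x.
  rewrite [LHS](reindex_inj (addrI 1)) mulr_sumr /=.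
  by apply: eq_bigr => x _; rewrite ED E1.
have : (1 - z) * \sum_(x : F) E x = 0 by rewrite mulrBl mul1r -h subrr.
move/eqP; rewrite mulf_eq0 subr_eq0 => /orP[/eqP h1|/eqP //].
have := prim_order_dvd zeta_prim 1; rewrite expr1 -h1 eqxx.
by move/(dvdn_leq (isT : (0 < 1)%N)); rewrite leqNgt p_gt1.
Qed.

Lemma card_F : #|F| = p.
Proof. exact: card_Fp. Qed.

Lemma sum_mulE (a : F) : \sum_(x : F) E (a * x) = if a == 0 then p%:R else 0.
Proof.
case: eqP => [->|/eqP a0].
  by under eq_bigr do rewrite mul0r E0; rewrite sumr_const card_F.
by transitivity (\sum_(x : F) E x); [exact: (esym (reindex_inj (mulfI a0))) | exact: sumE].
Qed.

Local Notation r := ((p.-1)./2).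

Lemma p_eq : p = (r.*2).+1.
Proof.
have h1 := odd_double_half p.-1.
have h2 : odd p.-1 = false.
  by move: odd_p; rewrite -{1}(prednK (prime_gt0 pr_p)) /= => /negbTE.
rewrite h2 /= add0n in h1.
by rewrite h1 prednK // prime_gt0.
Qed.

Lemma sq_inj j k : (j < r.+1)%N -> (k < r.+1)%N ->
  (j%:R : F) ^+ 2 = (k%:R) ^+ 2 -> j = k.
Proof.
move=> hj hk /eqP; rewrite -subr_eq0 subr_sqr mulf_eq0 => /orP[|].
  rewrite subr_eq0 => /eqP /(congr1 (@nat_of_ord _)).
  rewrite !val_Fp_nat // !modn_small //; rewrite p_eq; lia.
rewrite -natrD Fnat_eq0 => /(dvdn_leq _).
have := p_eq; lia.
Qed.

Definition rep (x : F) : nat := if ((x : nat) <= r)%N then (x : nat) else (p - x)%N.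

Lemma rep_lt x : (rep x < r.+1)%N.
Proof.
rewrite /rep; case: ifP => //; have := valF_lt x; have := p_eq; lia.
Qed.

Lemma rep_sq x : ((rep x)%:R : F) ^+ 2 = x ^+ 2.
Proof.
rewrite /rep; case: ifP => _; first by rewrite -Fp_val.
rewrite natrB ?(ltnW (valF_lt x)) // pchar_Fp_0 // sub0r sqrrN -Fp_val //.
Qed.

Lemma sum_split (s t : 'I_r -> F) (u : F -> algC) :
  (forall j, s j != 0) -> (forall j, t j != 0) -> injective s -> injective t ->
  (forall j k, s j != t k) ->
  \sum_(x : F) u x = u 0 + \sum_(j < r) u (s j) + \sum_(j < r) u (t j).
Proof.
move=> s0 t0 sI tI st.
pose h (bj : bool * 'I_r) := if bj.1 then s bj.2 else t bj.2.
have hI : injective h.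
  move=> [[] j] [[] k] /=; rewrite /h /=.
  - by move/sI ->.
  - by move=> e; move: (st j k); rewrite e eqxx.
  - by move=> e; move: (st k j); rewrite e eqxx.
  - by move/tI ->.
have himg : h @: setT = [set~ 0].
  apply/eqP; rewrite eqEcard; apply/andP; split.
    apply/subsetP => _ /imsetP[[[] j] _ ->]; rewrite !inE /h /=.
    - exact: s0.
    - exact: t0.
  rewrite card_imset // cardsC1 card_F cardsT card_prod card_bool card_ord.
  by rewrite {1}p_eq /= mul2n.
rewrite (bigD1 0) //= -addrA; congr (_ + _).
rewrite (eq_bigl (fun x => x \in h @: setT)); last by move=> x; rewrite himg !inE.
rewrite big_imset /=; last by move=> ? ? _ _; apply: hI.
rewrite (eq_bigl predT); last by move=> x; rewrite inE.
rewrite -(pair_big predT predT (fun b j => u (h (b, j)))) /= big_bool /=.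
by [].
Qed.

Lemma exists_nr : exists c : F, forall x : F, x ^+ 2 != c.
Proof.
pose S := [set ((j : nat)%:R : F) ^+ 2 | j : 'I_r.+1].
have : ~~ ([set: F] \subset S).
  apply/negP => /subset_leq_card; rewrite cardsT card_F.
  move/leq_trans => /(_ _ (leq_imset_card _ _)); rewrite card_ord.
  by have := p_eq; have := p_gt1; lia.
case/subsetPn => c _ cS; exists c => x; apply: contra cS => /eqP <-.
by apply/imsetP; exists (Ordinal (rep_lt x)) => //=; rewrite rep_sq.
Qed.

Definition sj (j : 'I_r) : F := (j.+1)%:R.

Lemma sj_neq0 j : sj j != 0.
Proof. rewrite /sj Fnat_eq0; apply/negP => /dvdn_leq; have := ltn_ord j; have := p_eq; lia. Qed.

Lemma sj_inj : injective sj.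
Proof.
move=> j k /(congr1 (fun x => x ^+ 2)) /sq_inj h; apply: val_inj; apply/eq_add_S/h.
  by have := ltn_ord j; lia.
by have := ltn_ord k; lia.
Qed.

Lemma sum_sq (v : F -> algC) :
  \sum_(x : F) v (x ^+ 2) = v 0 + 2%:R * \sum_(j < r) v (sj j ^+ 2).
Proof.
rewrite (@sum_split sj (fun j => - sj j)).
- by rewrite expr0n /= -addrA mulr2n mulrDl mul1r; under [X in _ + (_ + X)]eq_bigr do rewrite sqrrN.
- exact: sj_neq0.
- by move=> j; rewrite oppr_eq0 sj_neq0.
- exact: sj_inj.
- by move=> j k /oppr_inj /sj_inj.
move=> j k; rewrite -addr_eq0 /sj -natrD Fnat_eq0; apply/negP => /dvdn_leq.
by have := ltn_ord j; have := ltn_ord k; have := p_eq; lia.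
Qed.

Lemma sum_nr (c : F) (u : F -> algC) : (forall x : F, x ^+ 2 != c) ->
  \sum_(x : F) u x = u 0 + \sum_(j < r) u (sj j ^+ 2) + \sum_(j < r) u (c * sj j ^+ 2).
Proof.
move=> nr; have c0 : c != 0 by move: (nr 0); rewrite expr0n eq_sym.
apply: sum_split.
- by move=> j; rewrite sqrf_eq0 sj_neq0.
- by move=> j; rewrite mulf_neq0 // sqrf_eq0 sj_neq0.
- move=> j k /sq_inj h; apply: val_inj; apply/eq_add_S/h.
    by have := ltn_ord j; lia.
  by have := ltn_ord k; lia.
- move=> j k /(mulfI c0) /sq_inj h; apply: val_inj; apply/eq_add_S/h.
    by have := ltn_ord j; lia.
  by have := ltn_ord k; lia.
move=> j k; apply/eqP => e; move: (nr (sj j / sj k)).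
by rewrite expr_div_n e mulfK ?eqxx // sqrf_eq0 sj_neq0.
Qed.

Lemma gauss_prod :
  (\sum_(x : F) E (x ^+ 2)) * (\sum_(x : F) E (- x ^+ 2)) = p%:R.
Proof.
rewrite mulr_suml.
transitivity (\sum_(x : F) \sum_(t : F) E (- t ^+ 2) * E ((- (2%:R * t)) * x)).
  apply: eq_bigr => x _; rewrite mulr_sumr (reindex_inj (addrI x)) /=.
  apply: eq_bigr => t _; rewrite -!ED; congr E; ring.
rewrite exchange_big /=.
under eq_bigr => t _ do rewrite -mulr_sumr sum_mulE.
rewrite (bigD1 0) //= big1 ?addr0.
  by rewrite mulr0 oppr0 eqxx expr0n oppr0 E0 mul1r.
move=> t t0; rewrite oppr_eq0 mulf_eq0 (negbTE two_neq0) (negbTE t0) /=.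
by rewrite mulr0.
Qed.

Definition Hs := \sum_(j < r) E (sj j ^+ 2).

Lemma E_Aint x : E x \in Aint.
Proof. by rewrite /E rpredX // (Aint_prim_root zeta_prim). Qed.

Lemma Hs_Aint : Hs \in Aint.
Proof. by rewrite /Hs rpred_sum // => j _; apply: E_Aint. Qed.

Lemma G_Hs : \sum_(x : F) E (x ^+ 2) = 1 + 2%:R * Hs.
Proof. by rewrite sum_sq E0. Qed.

Lemma Gsq_pm : (1 + 2%:R * Hs) ^+ 2 = p%:R \/ (1 + 2%:R * Hs) ^+ 2 = - p%:R.
Proof.
have hp := gauss_prod; rewrite G_Hs in hp.
case: (boolP [exists d : F, d ^+ 2 == -1]).
  case/existsP => d /eqP hd; left; rewrite -hp expr2; congr (_ * _).
  have d0 : d != 0 by apply/eqP => d0; move: hd; rewrite d0 expr0n => /eqP; rewrite eq_sym oppr_eq0 oner_eq0.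
  rewrite -G_Hs (reindex_inj (mulfI d0)) /=; apply: eq_bigr => x _.
  by rewrite exprMn hd mulN1r.
move=> nd; right.
have nr : forall x : F, x ^+ 2 != -1.
  by move=> x; apply/negP => hx; move/negP: nd; apply; apply/existsP; exists x.
have := sum_nr E nr; rewrite sumE E0 => e0.
have eG' := sum_sq (fun y => E (- y)); rewrite /= oppr0 E0 in eG'.
rewrite eG' /Hs in hp; rewrite -hp /Hs.
under [X in _ = - (_ * (_ + _ * X))]eq_bigr do rewrite -mulN1r.
set A := \sum_(j < r) _ in e0 *; set B := \sum_(j < r) _ in e0 *.
have -> : B = -1 - A by apply: (addrI (1 + A)); rewrite -e0; ring.
ring.
Qed.

Lemma Hs_sq : (1 + 2%:R * Hs) ^+ 2 = sqrt_eps_p p ^+ 2.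
Proof.
rewrite /sqrt_eps_p; case: Gsq_pm => e.
  have [k ek] := @mod4_aux Hs p Hs_Aint e.
  have -> : (p %% 4 == 1)%N by apply/eqP; lia.
  by rewrite e sqrtCK.
have [k ek] : exists k : int, - p%:Z - 1 = 4 * k.
  by apply: (@mod4_aux Hs); [exact: Hs_Aint | rewrite e rmorphN].
have -> : (p %% 4 == 1)%N = false by apply/eqP; lia.
by rewrite e exprMn sqrtCK sqrCi mulN1r.
Qed.

Lemma Hs_Zw : in_Z_omega p Hs.
Proof.
have := Hs_sq; move/eqP; rewrite -subr_eq0 subr_sqr mulf_eq0 => /orP[] /eqP e.
  have -> : Hs = omega p - 1.
    rewrite /omega; move/eqP: e; rewrite subr_eq0 => /eqP <-; by field.
  exact: (Zw_sub (Zw_omega p) (Zw_1 p)).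
have -> : Hs = - omega p.
  rewrite /omega; have -> : sqrt_eps_p p = -(1 + 2%:R * Hs) by apply: (addrI (1 + 2%:R * Hs)); rewrite e subrr.
  by field.
exact: (Zw_opp (Zw_omega p)).
Qed.

Lemma sumF_nat (G : nat -> algC) : \sum_(x : F) G (x : nat) = \sum_(i < p) G i.
Proof. by rewrite -(big_mkord xpredT G) Fp_cast // big_mkord. Qed.

Lemma Ea_prim (a : F) : a != 0 -> p.-primitive_root (E a).
Proof.
move=> a0; rewrite /E prim_root_exp_coprime ?zeta_prim // coprime_sym prime_coprime //.
by apply/negP => hd; move: a0; rewrite [a]Fp_val Fnat_eq0 hd.
Qed.

Definition Wp (w : F -> int) : {poly rat} := \poly_(i < p) (w (i%:R))%:~R.

Lemma Wp_root (a : F) (w : F -> int) : 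
  \sum_(x : F) (w x)%:~R * E (a * x) = 0 -> root (map_poly ratr (Wp w)) (E a).
Proof.
move=> h; rewrite /root (horner_coef_wide _ (n := p)); last first.
  by rewrite size_map_poly size_poly.
apply/eqP; rewrite -[RHS]h.
have e := sumF_nat (fun i => (map_poly ratr (Wp w))`_i * E a ^+ i); simpl in e.
rewrite -e; apply: eq_bigr => x _.
by rewrite coef_map coef_poly valF_lt /= rmorph_int -Fp_val -EMn -Fp_val.
Qed.

Lemma indep (a : F) (w : F -> int) : a != 0 ->
  \sum_(x : F) (w x)%:~R * E (a * x) = 0 -> forall x, w x = w 0.
Proof.
move=> a0 h.
have [pf [Dpf _] dv] := minCpolyP (E a).
have spf : size pf = p.
  rewrite -(size_map_poly (@ratr algC)) -Dpf (minCpoly_cyclotomic (Ea_prim a0)).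
  by rewrite size_cyclotomic totient_prime // prednK // prime_gt0.
have pf0 : pf != 0 by rewrite -size_poly_eq0 spf -lt0n prime_gt0.
have dW : pf %| Wp w by rewrite -dv; apply: Wp_root.
have dU : pf %| Wp (fun _ => 1).
  rewrite -dv; apply: Wp_root; under eq_bigr do rewrite mul1r.
  by rewrite sum_mulE (negbTE a0).
have const (q : {poly rat}) : pf %| q -> (size q <= p)%N -> q = (q %/ pf)`_0 *: pf.
  move=> dq sq; rewrite -mul_polyC -[LHS](divpK dq); congr (_ * _).
  apply: size1_polyC; rewrite size_divp // spf.
  by rewrite leq_subLR addn1 prednK ?prime_gt0.
have eW := const _ dW (size_poly _ _); have eU := const _ dU (size_poly _ _).
set k := (Wp w %/ pf)`_0 in eW; set k' := (Wp (fun _ => 1) %/ pf)`_0 in eU.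
have cW i : (i < p)%N -> ((w i%:R)%:~R : rat) = k * pf`_i.
  by move=> ip; rewrite -coefZ -eW coef_poly ip.
have cU i : (i < p)%N -> (1 : rat) = k' * pf`_i.
  by move=> ip; rewrite -coefZ -eU coef_poly ip.
have k'0 : k' != 0 by apply/eqP => k0; have := cU 0%N (prime_gt0 pr_p); rewrite k0 mul0r.
have ci i : (i < p)%N -> ((w i%:R)%:~R : rat) = k / k'.
  move=> ip; rewrite cW // -[k in RHS]mulr1 (cU i ip); field; exact: k'0.
move=> x; rewrite [x]Fp_val; apply: (@intr_inj rat).
by rewrite ci ?valF_lt // -(ci 0%N) ?prime_gt0.
Qed.

Definition ncoef (Q : {poly int}) (k : F) : int :=
  \sum_(i < size Q | (i%:R : F) == k) Q`_i.

Lemma ev_ncoef (Q : {poly int}) (a : F) :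
  (map_poly intr Q).[E a] = \sum_(k : F) (ncoef Q k)%:~R * E (a * k).
Proof.
rewrite horner_coef size_map_inj_poly ?rmorph0 //; last exact: intr_inj.
rewrite (partition_big (fun i : 'I_(size Q) => (i%:R : F)) predT) //=.
apply: eq_bigr => k _; rewrite /ncoef rmorph_sum mulr_suml.
apply: eq_big => // i /eqP <-.
by rewrite coef_map /= -EMn.
Qed.

Lemma core (Q : {poly int}) :
  (forall d : F, d != 0 -> (map_poly intr Q).[E (d ^+ 2)] = (map_poly intr Q).[E 1]) ->
  in_Z_omega p ((map_poly intr Q).[z]).
Proof.
move=> inv.
have ninv (d k : F) : d != 0 -> ncoef Q (d ^+ 2 * k) = ncoef Q k.
  move=> d0; have q0 : d ^+ 2 != 0 by rewrite sqrf_eq0.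
  have h : \sum_(k : F) ((ncoef Q k - ncoef Q (d ^+ 2 * k))%:~R) * E (d ^+ 2 * k) = 0.
    under eq_bigr do rewrite rmorphB /= mulrBl.
    rewrite sumrB -ev_ncoef (inv d d0) ev_ncoef.
    rewrite (reindex_inj (mulfI q0)) /=.
    by under eq_bigr do rewrite mul1r; rewrite subrr.
  have := indep q0 h k; rewrite mulr0 subrr => /eqP; rewrite subr_eq0 => /eqP.
  by [].
have [c nr] := exists_nr.
have hc := sum_nr E nr; rewrite sumE E0 in hc.
rewrite -E1 ev_ncoef (sum_nr _ nr) mulr0 E0 mulr1.
under eq_bigr do rewrite mul1r -[sj _ ^+ 2]mulr1 ninv ?sj_neq0 // mulr1.
under [X in _ + X]eq_bigr do rewrite mul1r [c * _]mulrC ninv ?sj_neq0 // [_ * c]mulrC.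
rewrite -!mulr_sumr -/Hs.
have -> : \sum_(j < r) E (c * sj j ^+ 2) = -1 - Hs.
  by apply: (addrI (1 + Hs)); rewrite /Hs -hc; ring.
apply: Zw_add; first apply: Zw_add.
- exact: Zw_int.
- apply: Zw_mul; [exact: Zw_int | exact: Hs_Zw].
- apply: Zw_mul; first exact: Zw_int.
  apply: Zw_sub; [exact: Zw_opp (Zw_1 p) | exact: Hs_Zw].
Qed.

Lemma zexpz (m : int) : z ^ m = E (m%:~R).
Proof.
case: m => k.
  by change (z ^+ k = E (k%:R)); rewrite Enat.
change ((z ^+ k.+1)^-1 = E (- (k.+1%:R))).
by rewrite EN Enat.
Qed.

Lemma Fint_eq0 (m : int) : (m%:~R : F) = 0 -> (p%:Z %| m)%Z.
Proof.
case: m => k.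
  by change ((k%:R : F) = 0 -> (p%:Z %| k%:Z)%Z); move/eqP; rewrite Fnat_eq0 dvdzE.
change ((- (k.+1%:R) : F) = 0 -> (p%:Z %| Negz k)%Z); move/eqP; rewrite oppr_eq0 Fnat_eq0.
by rewrite dvdzE.
Qed.

Local Notation n := r.+1.

Definition phi (a : F) := (horner_eval (E a) \o map_poly intr)%FUN.

Lemma phi_Xn a m : phi a ('X^m) = E a ^+ m.
Proof. by rewrite /phi /= map_polyXn /horner_eval hornerXn. Qed.

Definition Fpoly (g : F) : {poly {poly int}} :=
  \prod_(j < n) ('X - ('X^(nat_of_ord ((g * (j : nat)%:R ^+ 2)%R : F)))%:P).

Lemma map_Fpoly (g a : F) :
  map_poly (phi a) (Fpoly g) = \prod_(j < n) ('X - (E (a * (g * (j : nat)%:R ^+ 2)))%:P).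
Proof.
rewrite /Fpoly rmorph_prod; apply: eq_bigr => j _.
rewrite rmorphB; set y := nat_of_ord _.
by rewrite /= map_polyX map_polyC /= map_polyXn /horner_eval hornerXn /y -EMn -Fp_val.
Qed.

Definition rho (d : F) (j : 'I_n) : 'I_n := Ordinal (rep_lt (d * (j : nat)%:R)).

Lemma rho_inj d : d != 0 -> injective (rho d).
Proof.
move=> d0 j k /(congr1 (fun i : 'I_n => ((i : nat)%:R : F) ^+ 2)) /=.
rewrite !rep_sq !exprMn => /(mulfI _) h.
apply: val_inj; apply: (sq_inj (ltn_ord j) (ltn_ord k)); apply: h; by rewrite sqrf_eq0.
Qed.

Lemma Fpoly_inv (g d : F) : d != 0 ->
  map_poly (phi (d ^+ 2)) (Fpoly g) = map_poly (phi 1) (Fpoly g).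
Proof.
move=> d0; rewrite !map_Fpoly [RHS](reindex_inj (rho_inj d0)) /=.
apply: eq_bigr => j _; rewrite /rho /= rep_sq mul1r; congr ('X - (E _)%:P).
by rewrite exprMn; ring.
Qed.

Lemma Fpoly_coef (g : F) m : in_Z_omega p ((map_poly (phi 1) (Fpoly g))`_m).
Proof.
rewrite coef_map /= /horner_eval E1; apply: core => d d0.
have phi0 a : phi a 0 = 0 by rewrite /phi /= rmorph0 /horner_eval horner0.
move: (congr1 (fun P : {poly algC} => P`_m) (Fpoly_inv g d0)).
by rewrite /= !coef_map_id0.
Qed.

Lemma theta_E (c : int) (j : nat) : theta p c j = E ((c%:~R : F) * (j%:R) ^+ 2).
Proof. by rewrite /theta zexpz rmorphM /= -natrX. Qed.

Lemma main_thm (c : int) : (c%:~R : F) != 0 ->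
  forall i j : 'I_n, in_Z_omega p (Tprime p c i j).
Proof.
move=> g0.
have thI : injective (fun j : 'I_n => theta p c j).
  move=> j k; rewrite /= !theta_E => /E_inj /(mulfI g0) e.
  exact/val_inj/(sq_inj (ltn_ord j) (ltn_ord k) e).
have -> : Tprime p c = Cm (fun j : 'I_n => theta p c j) by apply: companion.
move=> i k; rewrite mxE.
case: (k == ord_max).
  apply: Zw_opp.
  have -> : fp (fun j : 'I_n => theta p c j) = map_poly (phi 1) (Fpoly (c%:~R)).
    rewrite map_Fpoly; apply: eq_bigr => j _; by rewrite mul1r theta_E.
  exact: Fpoly_coef.
case: (_ == _); [exact: Zw_1 | exact: Zw_0].
Qed.
End Basics.
Theorem theorem1 (p : nat) (c : int) :
  prime p -> odd p -> (c = 1 \/ qnr p c) ->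
  forall i j : 'I_((p.-1)./2.+1), in_Z_omega p (Tprime p c i j).
Proof.
move=> pr_p odd_p hc; apply: main_thm => //.
case: hc => [->|[nd _]]; first by rewrite rmorph1 oner_neq0.
by apply/eqP => /(Fint_eq0 pr_p); apply/negP.
Qed.
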